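(* Let $\mathsf K\in\{\mathsf O,\mathsf{Sp}\}$ and $z\in I_n$. Then $MX^{\mathsf K}_z=\{A\in\mathsf{Mat}^{\mathsf K}_n:\operatorname{rank}(A_{[i][j]})\le\operatorname{rank}(z_{[i][j]})\text{ for all }(i,j)\in\operatorname{Ess}(D^{\mathsf O}(z))\}.$ Moreover, if $n$ is even and $z\in I^{\mathsf{FPF}}_n$ then $MX^{\mathsf{Sp}}_z=\{A\in\mathsf{Mat}^{\mathsf{Sp}}_n:\operatorname{rank}(A_{[i][j]})\le\operatorname{rank}(z_{[i][j]})\text{ for all }(i,j)\in\operatorname{Ess}(D^{\mathsf{Sp}}(z))\}.$
   Context: $I_n$ (resp. $I^{\mathsf{FPF}}_n$) is the set of involutions (resp. fixed-point-free involutions) in $S_n$; $z$ is identified with its permutation matrix with $1$'s at $(i,z(i))$; $A_{[i][j]}$ is the upper-left $i\times j$ submatrix. $\mathsf{Mat}^{\mathsf O}_n$ (resp. $\mathsf{Mat}^{\mathsf{Sp}}_n$) is the space of complex symmetric (resp. skew-symmetric) $n\times n$ matrices, and $MX^{\mathsf K}_z=\{A\in\mathsf{Mat}^{\mathsf K}_n:\operatorname{rank}(A_{[i][j]})\le\operatorname{rank}(z_{[i][j]})\ \forall i,j\in[n]\}$. The orthogonal Rothe diagram is $D^{\mathsf O}(z)=\{(i,z(j)):(i,j)\in[n]^2,\ z(i)>z(j)\le i<j\}$ and the symplectic Rothe diagram is $D^{\mathsf{Sp}}(z)=\{(i,z(j)):(i,j)\in[n]^2,\ z(i)>z(j)<i<j\}$.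 For $D\subseteq\mathbb{P}\times\mathbb{P}$, $\operatorname{Ess}(D)=\{(i,j)\in D:(i,j+1)\notin D,\ (i+1,j)\notin D\}$. *)

(* Defs.v *)
From HB Require Import structures.
From mathcomp Require Import all_boot all_order all_algebra all_fingroup.
From mathcomp Require Import complex.
From mathcomp Require Import Rstruct.
From Stdlib Require Reals.
Set Implicit Arguments. Unset Strict Implicit. Unset Printing Implicit Defensive.
Import Order.TTheory GRing.Theory Num.Theory.
Local Open Scope ring_scope.

Notation CC := (complex Rdefinitions.R).

(* Index convention: the paper's index k in [n] = {1..n} is the ordinal
   k-1 : 'I_n; all comparisons are order-preserving, so we can use ordinals. *)

Definition is_involution n (z : 'S_n) : bool := [forall i, z (z i) == i].
Definition is_fpf_involution n (z : 'S_n) : bool :=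
  is_involution z && [forall i, z i != i].

Definition zmat n (z : 'S_n) : 'M[CC]_n := perm_mx z.

(* Upper-left (i+1) x (j+1) submatrix A_[i+1][j+1], for i j : 'I_n. *)
Definition ulsub (F : Type) n (A : 'M[F]_n) (i j : 'I_n) : 'M[F]_(i.+1, j.+1) :=
  \matrix_(a < i.+1, b < j.+1) A (widen_ord (ltn_ord i) a) (widen_ord (ltn_ord j) b).

Inductive kind := KO | KSp.

Definition matK (K : kind) n (A : 'M[CC]_n) : bool :=
  match K with
  | KO => A^T == A
  | KSp => A^T == - A
  end.

Definition MX (K : kind) n (z : 'S_n) (A : 'M[CC]_n) : Prop :=
  matK K A /\
  forall i j : 'I_n, (\rank (ulsub A i j) <= \rank (ulsub (zmat z) i j))%N.

Definition DO n (z : 'S_n) (p : nat * nat) : bool :=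
  [exists i : 'I_n, exists j : 'I_n,
     [&& p == (val i, val (z j)), (z j < z i)%N, (z j <= i)%N & (i < j)%N]].

Definition DSp n (z : 'S_n) (p : nat * nat) : bool :=
  [exists i : 'I_n, exists j : 'I_n,
     [&& p == (val i, val (z j)), (z j < z i)%N, (z j < i)%N & (i < j)%N]].

Definition Ess (D : nat * nat -> bool) (p : nat * nat) : bool :=
  [&& D p, ~~ D (p.1, p.2.+1) & ~~ D (p.1.+1, p.2)].

(* Main.v *)
Require Import Defs.
From HB Require Import structures.
From mathcomp Require Import all_boot all_order all_algebra all_fingroup.
From mathcomp Require Import complex Rstruct.
From mathcomp Require Import zify.
Set Implicit Arguments. Unset Strict Implicit. Unset Printing Implicit Defensive.
Import Order.TTheory GRing.Theory Num.Theory.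
Local Open Scope ring_scope.

Definition ra n (A : 'M[CC]_n) p q := \rank ((pid_mx p : 'M[CC]_n) *m A *m (pid_mx q : 'M[CC]_n)).

Lemma ulsubE n (A : 'M[CC]_n) (i j : 'I_n) :
  ulsub A i j = (pid_mx i.+1 : 'M_(i.+1, n)) *m A *m (pid_mx j.+1 : 'M_(n, j.+1)).
Proof.
apply/matrixP => a b; rewrite !mxE.
rewrite (bigD1 (widen_ord (ltn_ord j) b)) //= big1 ?addr0; last first.
  move=> k /negPf hk; rewrite !mxE.
  have -> : (k == b :> nat) = false by rewrite -hk; apply/eqP/eqP => [h|/(congr1 val)//]; exact: val_inj.
  by rewrite andFb mulr0.
rewrite !mxE /= eqxx ltn_ord mulr1.
rewrite (bigD1 (widen_ord (ltn_ord i) a)) //= big1 ?addr0; last first.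
  move=> k /negPf hk; rewrite !mxE.
  have -> : (a == k :> nat) = false by rewrite eq_sym -hk; apply/eqP/eqP => [h|/(congr1 val)//]; exact: val_inj.
  by rewrite andFb mul0r.
by rewrite !mxE /= eqxx ltn_ord mul1r.
Qed.

Lemma ulsub_rank n (A : 'M[CC]_n) (i j : 'I_n) : \rank (ulsub A i j) = ra A i.+1 j.+1.
Proof.
rewrite ulsubE /ra; apply/eqP; rewrite eqn_leq; apply/andP; split.
  have -> : (pid_mx i.+1 : 'M_(i.+1, n)) *m A *m (pid_mx j.+1 : 'M_(n, j.+1)) =
    (pid_mx i.+1 : 'M_(i.+1, n)) *m (pid_mx i.+1 *m A *m pid_mx j.+1) *m (pid_mx j.+1 : 'M_(n, j.+1)).
    rewrite !mulmxA mul_pid_mx -!mulmxA mul_pid_mx.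
    have := ltn_ord i; have := ltn_ord j => hj hi.
    have e1 : minn n (minn i.+1 i.+1) = i.+1 by lia.
    have e2 : minn n (minn j.+1 j.+1) = j.+1 by lia.
    by rewrite e1 e2.
  by apply: leq_trans (mxrankM_maxl _ _) (mxrankM_maxr _ _).
have -> : (pid_mx i.+1 : 'M_n) *m A *m (pid_mx j.+1 : 'M_n) =
    (pid_mx i.+1 : 'M_(n, i.+1)) *m ((pid_mx i.+1 : 'M_(i.+1, n)) *m A *m (pid_mx j.+1 : 'M_(n, j.+1))) *m (pid_mx j.+1 : 'M_(j.+1, n)).
  rewrite !mulmxA mul_pid_mx -!mulmxA mul_pid_mx.
  have := ltn_ord i; have := ltn_ord j => hj hi.
  by rewrite !minnn.
by apply: leq_trans (mxrankM_maxl _ _) (mxrankM_maxr _ _).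
Qed.
Lemma rankN m n (A : 'M[CC]_(m, n)) : \rank (- A) = \rank A.
Proof. exact: (eqmx_opp A).1. Qed.

Lemma mx11_skew0 (b : 'M[CC]_1) : b^T = - b -> b = 0.
Proof.
move=> h; apply/matrixP => i j; rewrite !ord1 mxE.
have := congr1 (fun m : 'M[CC]_1 => m 0 0) h; rewrite !mxE => e.
have : b 0 0 *+ 2 == 0 by rewrite mulr2n {1}e addNr.
by rewrite mulrn_eq0 /= => /eqP.
Qed.

Lemma skew_even k (M : 'M[CC]_k) : M^T = - M -> ~~ odd (\rank M).
Proof.
elim: k M => [|k IH] M HM.
  by have := rank_leq_row M; rewrite leqn0 => /eqP ->.
pose M' : 'M[CC]_(1 + k) := M.
have HM' : M'^T = - M' := HM.
change (~~ odd (\rank M')); move: HM'; clearbody M'; clear HM M.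
rewrite -(submxK M').
set a := ulsubmx M'; set u := ursubmx M'; set w := dlsubmx M'; set N := drsubmx M'.
clearbody a u w N; clear M'.
rewrite tr_block_mx opp_block_mx => /eq_block_mx [Ha Hw Hu HN].
have a0 : a = 0 by apply: mx11_skew0.
subst a.
have IHN := IH N HN.
have ew : w = - u^T by rewrite Hu opprK.
have [uN|uN] := boolP (u <= N)%MS.
  case/submxP: uN => x ex.
  have s0 : x *m N *m x^T = 0.
    apply: mx11_skew0.
    by rewrite !trmx_mul trmxK HN mulNmx mulmxN mulmxA.
  have eM : block_mx 0 u w N = col_mx x 1%:M *m N *m row_mx x^T 1%:M.
    rewrite mul_col_mx mul1mx mul_col_row s0 mulmx1 -ex mulmx1.
    by rewrite ew ex trmx_mul HN mulNmx opprK.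
  have -> : \rank (block_mx 0 u w N) = \rank N; last by [].
  apply/eqP; rewrite eqn_leq; apply/andP; split.
    rewrite eM.
    have h1 := mxrankM_maxl (col_mx x 1%:M *m N) (row_mx x^T 1%:M).
    have h2 := mxrankM_maxr (col_mx x 1%:M) N.
    exact: leq_trans h1 h2.
  have eN : row_mx (0 : 'M_(k, 1)) 1%:M *m block_mx 0 u w N *m col_mx (0 : 'M_(1, k)) 1%:M = N.
    by rewrite mul_row_block !mul0mx !mul1mx !add0r mul_row_col !mulmx0 mulmx1 add0r.
  rewrite -{1}eN.
  have h1 := mxrankM_maxl (row_mx (0 : 'M_(k, 1)) 1%:M *m block_mx 0 u w N) (col_mx (0 : 'M_(1, k)) 1%:M).
  have h2 := mxrankM_maxr (row_mx (0 : 'M_(k, 1)) 1%:M) (block_mx 0 u w N).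
  exact: leq_trans h1 h2.
set B := row_mx w N.
have rB : \rank B = \rank (u + N)%MS.
  rewrite -mxrank_tr tr_row_mx Hw HN -opp_col_mx rankN.
  by rewrite -(addsmxE u N).1.
have ltNB : (\rank N < \rank B)%N.
  rewrite rB; apply: rank_ltmx; rewrite ltmxE addsmxSr /= addsmx_sub negb_and uN //.
have ltBM : (\rank B < \rank (block_mx 0 u w N))%N.
  rewrite block_mxEv -/B -(addsmxE _ _).1.
  apply: rank_ltmx; rewrite ltmxE addsmxSr /= addsmx_sub submx_refl andbT.
  apply/negP; case/submxP => y; rewrite mul_mx_row => /eq_row_mx [_ ey].
  by move: uN; rewrite ey submxMl.
have rB1 : (\rank B <= (\rank N).+1)%N.
  rewrite -mxrank_tr tr_row_mx -(addsmxE _ _).1.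
  apply: leq_trans (mxrank_adds_leqif _ _).1 _.
  rewrite (mxrank_tr N); exact: leq_add (rank_leq_row _) (leqnn _).
have leM : (\rank (block_mx 0 u w N) <= (\rank N).+2)%N.
  rewrite block_mxEv -/B -(addsmxE _ _).1.
  exact: leq_trans (mxrank_adds_leqif _ _).1 (leq_add (rank_leq_row _) rB1).
have -> : \rank (block_mx 0 u w N) = (\rank N).+2.
  by apply/eqP; rewrite eqn_leq leM /=; apply: leq_trans ltBM.
by rewrite /= negbK.
Qed.
Lemma ra0 n (A : 'M[CC]_n) q : ra A 0 q = 0%N.
Proof. by rewrite /ra pid_mx_0 !mul0mx mxrank0. Qed.

Lemma raT n (A : 'M[CC]_n) p q : ra A p q = ra A^T q p.
Proof. by rewrite /ra -mxrank_tr !trmx_mul !tr_pid_mx mulmxA. Qed.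

Lemma ra0' n (A : 'M[CC]_n) p : ra A p 0 = 0%N.
Proof. by rewrite raT ra0. Qed.

Lemma raN n (A : 'M[CC]_n) p q : ra (- A) p q = ra A p q.
Proof. by rewrite /ra mulmxN mulNmx rankN. Qed.

Lemma ra_monor n (A : 'M[CC]_n) p q : (ra A p q <= ra A p.+1 q)%N.
Proof.
rewrite /ra.
have e : (pid_mx p : 'M[CC]_n) = (pid_mx p : 'M[CC]_n) *m (pid_mx p.+1 : 'M[CC]_n).
  by rewrite mul_pid_mx pid_mx_minv; congr pid_mx; lia.
rewrite {1}e -!mulmxA.
exact: mxrankM_maxr.
Qed.

Lemma ra_monoc n (A : 'M[CC]_n) p q : (ra A p q <= ra A p q.+1)%N.
Proof. by rewrite raT [X in (_ <= X)%N]raT ra_monor. Qed.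

Lemma pid_step n p (lt : (p < n)%N) :
  (pid_mx p.+1 : 'M[CC]_n) = pid_mx p + delta_mx (Ordinal lt) (Ordinal lt).
Proof.
apply/matrixP => a b; rewrite !mxE -!val_eqE /= ltnS leq_eqVlt.
case: (eqVneq (val a) p) => [->|ha] /=.
  by rewrite ltnn andbF add0r andbT eq_sym.
by rewrite addr0.
Qed.

Lemma ra_stepr n (A : 'M[CC]_n) p q : (ra A p.+1 q <= (ra A p q).+1)%N.
Proof.
rewrite /ra; case: (ltnP p n) => hp.
  rewrite pid_step mulmxDl mulmxDl.
  apply: leq_trans (mxrank_add _ _) _; rewrite -addn1 leq_add2l.
  rewrite -mulmxA; apply: (leq_trans (mxrankM_maxl _ _)).
  by rewrite mxrank_delta.
have e : forall r, (n <= r)%N -> (pid_mx r : 'M[CC]_n) = 1%:M.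
  by move=> r hr; rewrite -pid_mx_minv (minn_idPl hr) pid_mx_1.
by rewrite (e p.+1 (leqW hp)) (e p hp).
Qed.

Lemma ra_stepc n (A : 'M[CC]_n) p q : (ra A p q.+1 <= (ra A p q).+1)%N.
Proof. by rewrite raT [X in (_ <= X.+1)%N]raT ra_stepr. Qed.

Lemma ra_sym K n (A : 'M[CC]_n) p q : matK K A -> ra A p q = ra A q p.
Proof. by case: K => /= /eqP h; rewrite raT h ?raN. Qed.

Lemma ra_even n (A : 'M[CC]_n) p : matK KSp A -> ~~ odd (ra A p p).
Proof.
move=> /eqP h; apply: skew_even.
by rewrite !trmx_mul !tr_pid_mx h mulNmx mulmxN mulmxA.
Qed.
Lemma rank_diag n (d : 'rV[CC]_n) : \rank (diag_mx d) = (\sum_(k < n) (d ord0 k != 0%R : nat))%N.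
Proof.
elim: n d => [|n IH] d.
  by rewrite big_ord0; have := rank_leq_row (diag_mx d); rewrite leqn0 => /eqP.
pose d' : 'rV[CC]_(1 + n) := d.
change (\rank (diag_mx d') = (\sum_(k < n.+1) (d' ord0 k != 0%R : nat))%N).
clearbody d'; clear d.
rewrite -(hsubmxK d') diag_mx_row rank_diag_block_mx IH big_ord_recl.
congr (_ + _)%N.
  set l := lsubmx d'.
  have -> : row_mx l (rsubmx d') 0 ord0 = l 0 0.
    by rewrite (_ : ord0 = lshift n (0 : 'I_1)) ?row_mxEl //; apply: val_inj.
  move: l => l; rewrite [l _ _](_ : _ = l ord0 ord0) //.
  have [h|nz] := eqVneq (l ord0 ord0) 0.
    have -> : diag_mx l = 0 by apply/matrixP => i j; rewrite !ord1 !mxE h mul0rn.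
    by rewrite mxrank0.
  apply/eqP; rewrite eqn_leq rank_leq_row lt0n mxrank_eq0 /=.
  apply: contra nz => /eqP /matrixP /(_ ord0 ord0); rewrite !mxE /= mulr1n => ->; done.
apply: eq_bigr => i _.
by rewrite (_ : lift ord0 i = rshift 1 i) ?row_mxEr //; apply: val_inj.
Qed.

Definition cnt n (z : 'S_n) (p q : nat) : nat := (\sum_(k < n) ((k < p) && (z k < q)))%N.

Lemma ra_perm n (z : 'S_n) p q : ra (zmat z) p q = cnt z p q.
Proof.
pose d : 'rV[CC]_n := \row_k (((k < p) && (z k < q))%N)%:R.
have pidE : forall r, (pid_mx r : 'M[CC]_n) = diag_mx (\row_k ((k < r)%N)%:R).
  move=> r; apply/matrixP => a b; rewrite !mxE -val_eqE andbC.
  by case: (a < r)%N; case: (val a == val b).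
rewrite /ra /zmat.
have -> : (pid_mx p : 'M[CC]_n) *m perm_mx z *m pid_mx q = diag_mx d *m perm_mx z.
  rewrite !pidE mul_diag_mx mul_mx_diag mul_diag_mx; apply/matrixP => a b; rewrite !mxE.
  have [<-|ne] := eqVneq (z a) b.
    by rewrite !mulr1; case: (a < p)%N; case: (z a < q)%N; rewrite ?mul1r ?mul0r ?mulr1 ?mulr0.
  by rewrite ?mulr0 ?mul0r.
rewrite mxrankMfree ?row_free_unit ?unitmx_perm // rank_diag /cnt.
by apply: eq_bigr => k _; rewrite mxE; case: (_ && _); rewrite ?oner_eq0 ?eqxx.
Qed.

Lemma cnt0 n (z : 'S_n) q : cnt z 0 q = 0%N.
Proof. by rewrite /cnt big1. Qed.

Lemma cnt_stepr n (z : 'S_n) p q (hp : (p < n)%N) :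
  cnt z p.+1 q = (cnt z p q + (z (Ordinal hp) < q))%N.
Proof.
rewrite /cnt.
rewrite (eq_bigr (fun k : 'I_n => ((k < p) && (z k < q)) + ((k == Ordinal hp) && (z k < q))))%N; last first.
  move=> k _; rewrite ltnS leq_eqVlt -val_eqE /=.
  by case: (eqVneq (val k) p) => [->|_] /=; rewrite ?ltnn //= addn0.
rewrite big_split /=; congr (_ + _)%N.
rewrite (bigD1 (Ordinal hp)) //= eqxx /= big1 ?addn0 // => k /negPf ->; done.
Qed.

Lemma cnt_sym n (z : 'S_n) p q : is_involution z -> cnt z p q = cnt z q p.
Proof.
move=> /forallP zz; rewrite /cnt (reindex_inj (@perm_inj _ z)) /=.
by apply: eq_bigr => k _; rewrite (eqP (zz k)) andbC.
Qed.

Lemma cnt_stepc n (z : 'S_n) p q (hq : (q < n)%N) : is_involution z ->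
  cnt z p q.+1 = (cnt z p q + (z (Ordinal hq) < p))%N.
Proof. by move=> zi; rewrite !(cnt_sym p) // cnt_stepr. Qed.

Lemma cnt_even n (z : 'S_n) p : is_fpf_involution z -> ~~ odd (cnt z p p).
Proof.
case/andP => /forallP zz /forallP zf.
rewrite /cnt (bigID (fun k : 'I_n => (k < z k)%N)) /=.
set F := fun k : 'I_n => ((k < p) && (z k < p))%N.
have -> : (\sum_(i < n | ~~ (i < z i)%N) ((i < p) && (z i < p)))%N =
          (\sum_(i < n | (i < z i)%N) ((i < p) && (z i < p)))%N.
  rewrite (reindex_inj (@perm_inj _ z)) /=.
  apply: eq_big => k.
    rewrite (eqP (zz k)) -leqNgt leq_eqVlt.
    have := zf (z k); rewrite (eqP (zz k)) -val_eqE /= eq_sym => /negPf ->; done.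
  by rewrite (eqP (zz k)) andbC.
by rewrite addnn odd_double.
Qed.
Definition Dg (s : bool) n (z : 'S_n) (p : nat * nat) : bool :=
  [exists i : 'I_n, exists j : 'I_n,
     [&& p == (val i, val (z j)), (z j < z i)%N, (if s then (z j < i)%N else (z j <= i)%N) & (i < j)%N]].

Lemma Dg_ord s n (z : 'S_n) a b : Dg s z (a, b) -> exists i j : 'I_n, a = i /\ b = j.
Proof.
by case/existsP => i /existsP [j /and4P [/eqP [-> ->] _ _ _]]; exists i, (z j).
Qed.

Lemma Dg_char s n (z : 'S_n) (i j : 'I_n) : is_involution z ->
  Dg s z (val i, val j) = [&& (j < z i)%N, (i < z j)%N & (if s then (j < i)%N else (j <= i)%N)].
Proof.
move=> /forallP zz; apply/existsP/idP.
  case=> i' /existsP [j' /and4P [/eqP [e1 e2] h1 h2 h3]].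
  have ei : i = i' by apply: val_inj.
  have ej : j = z j' by apply: val_inj.
  subst i' j; rewrite (eqP (zz j')) h3 h1 /=. exact: h2.
case/and3P => h1 h2 h3; exists i; apply/existsP; exists (z j).
by rewrite (eqP (zz j)) eqxx h1 h2 andbT /=.
Qed.

Lemma par_le a b : ~~ odd a -> ~~ odd b -> (a <= b.+1)%N -> (a <= b)%N.
Proof.
move=> ha hb; rewrite leq_eqVlt ltnS => /orP [/eqP e|//].
by move: ha; rewrite e /= hb.
Qed.

Lemma main_gen (s : bool) K n (z : 'S_n) (A : 'M[CC]_n) :
  is_involution z -> matK K A ->
  (s -> K = KSp /\ is_fpf_involution z) ->
  (forall i j : 'I_n, Ess (Dg s z) (val i, val j) -> (ra A i.+1 j.+1 <= cnt z i.+1 j.+1)%N) ->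
  forall i j : 'I_n, (ra A i.+1 j.+1 <= cnt z i.+1 j.+1)%N.
Proof.
move=> zi hK hs hE.
have zz : forall k, z (z k) = k by move: zi => /forallP zz k; apply/eqP.
have C1 : forall i j : 'I_n, Dg s z (val i, val j) -> (ra A i.+1 j.+1 <= cnt z i.+1 j.+1)%N.
  suff : forall m (i j : 'I_n), (n - i + (n - j) <= m)%N -> Dg s z (val i, val j) ->
      (ra A i.+1 j.+1 <= cnt z i.+1 j.+1)%N by move=> H i j; apply: H (leqnn _).
  elim=> [|m IH] i j hm hD.
    by have := ltn_ord i; have := ltn_ord j; lia.
  case hEs : (Ess (Dg s z) (val i, val j)); first exact: hE.
  move: hEs; rewrite /Ess hD /= => /negbT; rewrite negb_and !negbK => /orP [h|h].
    have [i' [j1 [_ ej]]] := Dg_ord h.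
    have hD1 : Dg s z (val i, val j1) by move: h; rewrite ej.
    have := IH i j1 ltac:(have := ltn_ord j1; have := ltn_ord j; lia) hD1.
    move: hD1; rewrite Dg_char // => /and3P [_ hij1 _].
    rewrite (cnt_stepc _ (ltn_ord j1) zi) (_ : Ordinal (ltn_ord j1) = j1); last exact: val_inj.
    rewrite (_ : (z j1 < i.+1)%N = false) ?addn0 -?ej; last by rewrite ltnS leqNgt hij1. move=> h2.
    exact: leq_trans (ra_monoc _ _ _) h2.
  have [i1 [j' [ei _]]] := Dg_ord h.
  have hD1 : Dg s z (val i1, val j) by move: h; rewrite ei.
  have := IH i1 j ltac:(have := ltn_ord i1; have := ltn_ord i; lia) hD1.
  move: hD1; rewrite Dg_char // => /and3P [hji1 _ _].
  rewrite (cnt_stepr _ _ (ltn_ord i1)) (_ : Ordinal (ltn_ord i1) = i1); last exact: val_inj.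
  rewrite (_ : (z i1 < j.+1)%N = false) ?addn0 -?ei; last by rewrite ltnS leqNgt hji1. move=> h2.
  exact: leq_trans (ra_monor _ _ _) h2.
have C2 : forall i j : 'I_n, (j < z i)%N -> (i < z j)%N -> (~~ s || (val i != val j)) ->
    (ra A i.+1 j.+1 <= cnt z i.+1 j.+1)%N.
  move=> i j h1 h2 h3.
  case h4 : (if s then (j < i)%N else (j <= i)%N).
    by apply: C1; rewrite Dg_char // h1 h2 h4.
  rewrite (ra_sym _ _ hK) (cnt_sym _ _ zi); apply: C1; rewrite Dg_char // h1 h2 /=.
  by move: h3 h4; case: (s) => /= h3 h4; rewrite ?ltn_neqAle 1?eq_sym ?h3 /=; lia.
suff : forall m p q, (p + q <= m)%N -> (p <= n)%N -> (q <= n)%N -> (ra A p q <= cnt z p q)%N.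
  by move=> H i j; apply: (H _ _ _ (leqnn _)); apply: ltn_ord.
elim=> [|m IH] [|i] [|j] hm hp hq; rewrite ?ra0 ?ra0' //.
have hi : (i < n)%N by []. have hj : (j < n)%N by [].
pose oi := Ordinal hi; pose oj := Ordinal hj.
case h1 : (j < z oi)%N; last first.
  rewrite (cnt_stepr _ _ hi) -/oi (_ : (z oi < j.+1)%N = true) ?addn1; last by rewrite ltnS leqNgt h1.
  apply: leq_trans (ra_stepr _ _ _) _; rewrite ltnS.
  by apply: IH; lia.
case h2 : (i < z oj)%N; last first.
  rewrite (cnt_stepc _ hj zi) -/oj (_ : (z oj < i.+1)%N = true) ?addn1; last by rewrite ltnS leqNgt h2.
  apply: leq_trans (ra_stepc _ _ _) _; rewrite ltnS.
  by apply: IH; lia.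
case h3 : (~~ s || (i != j)).
  exact: (C2 oi oj h1 h2 h3).
move/negbT: h3; rewrite negb_or negbK => /andP [sT /negPn /eqP eij].
subst j; have [eK fpf] := hs sT; subst K.
apply: par_le; rewrite ?ra_even ?cnt_even //.
have -> : cnt z i.+1 i.+1 = cnt z i i.+1.
  by rewrite (cnt_stepr _ _ hi) -/oi (_ : (z oi < i.+1)%N = false) ?addn0 // ltnS leqNgt h1.
apply: leq_trans (ra_stepr _ _ _) _; rewrite ltnS.
by apply: IH; lia.
Qed.

Theorem proposition2p16 :
  (forall (K : kind) (n : nat) (z : 'S_n), is_involution z ->
     forall A : 'M[CC]_n,
       MX K z A <->
       (matK K A /\
        forall i j : 'I_n, Ess (DO z) (val i, val j) ->
          (\rank (ulsub A i j) <= \rank (ulsub (zmat z) i j))%N))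
  /\
  (forall (n : nat) (z : 'S_n), ~~ odd n -> is_fpf_involution z ->
     forall A : 'M[CC]_n,
       MX KSp z A <->
       (matK KSp A /\
        forall i j : 'I_n, Ess (DSp z) (val i, val j) ->
          (\rank (ulsub A i j) <= \rank (ulsub (zmat z) i j))%N)).
Proof.
split.
  move=> K n z zi A; split; first by case=> hK h; split=> // i j _; apply: h.
  case=> hK hE; split=> // i j; rewrite !ulsub_rank ra_perm.
  apply: (main_gen (s:=false) zi hK) => // i' j' hEs.
  by have := hE i' j' hEs; rewrite !ulsub_rank ra_perm.
move=> n z _ zf A; have zi : is_involution z by case/andP: zf.
split; first by case=> hK h; split=> // i j _; apply: h.
case=> hK hE; split=> // i j; rewrite !ulsub_rank ra_perm.
apply: (main_gen (s:=true) zi hK) => // i' j' hEs.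
by have := hE i' j' hEs; rewrite !ulsub_rank ra_perm.
Qed.
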